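(* Let $S_2$ be the two-dimensional Lie triple system with basis $e,f$ and products $[e,f,e]=2e$, $[e,f,f]=-2f$ (over a field of characteristic $0$). Then in $U(S_2)$, for every $n\ge1$, $$e^nf-fe^n=n(n-1)\,e^{n-1},$$ where $e^n=e(e(\cdots(ee)\cdots))$ ($n$ factors) and $e^0=1$.
   Context: A Lie triple system (L.t.s.) is a vector space $V$ with trilinear product $[\cdot,\cdot,\cdot]$ satisfying $[a,a,b]=0$, $[a,b,c]+[b,c,a]+[c,a,b]=0$, $[x,y,[a,b,c]]=[[x,y,a],b,c]+[a,[x,y,b],c]+[a,b,[x,y,c]]$ (so the products of $S_2$ determine the rest by these identities). The universal enveloping algebra $U(V)$ (in the sense of Pérez-Izquierdo, $V$ viewed as a Bol algebra with zero binary bracket) is a unital non-associative bialgebra generated as a unital algebra by $V\subseteq U(V)$ ($V$ = primitive elements), satisfying $\sum a_{(1)}(y(a_{(2)}z))=\sum (a_{(1)}(ya_{(2)}))z$; in particular, for $a,b,c\in V$, $ab=ba$, $a(bc)-b(ac)=[a,b,c]$, and for $a,b\in V$ the map $x\mapsto a(bx)-b(ax)$ is a derivation of $U(V)$. *)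

(* Defs.v *)
From HB Require Import structures.
From mathcomp Require Import all_boot all_order all_algebra.
Set Implicit Arguments. Unset Strict Implicit. Unset Printing Implicit Defensive.
Import GRing.Theory.
Local Open Scope ring_scope.

(* is the unique eone determined (via [a,a,b]=0, hence antisymmetry in the  *)
(* first two slots) by [e,f,e] = 2e, [e,f,f] = -2f:                        *)
(*   [x,y,z] = (x1 y2 - x2 y1) * (2 z1 e - 2 z2 f).                         *)
Section S2.
Variable K : fieldType.

Definition S2e : 'rV[K]_2 := \row_(j < 2) (if j == 0 then 1 else 0).
Definition S2f : 'rV[K]_2 := \row_(j < 2) (if j == 0 then 0 else 1).

Definition S2trip (x y z : 'rV[K]_2) : 'rV[K]_2 :=
  (x 0 0 * y 0 1 - x 0 1 * y 0 0) *: ((2 * z 0 0) *: S2e - (2 * z 0 1) *: S2f).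
End S2.

(* A unital non-associative K-algebra A (bilinear product emul, unit eone)   *)
(* together with a linear embedding eiota : V -> A of a Lie triple system   *)
(* (V, trip), satisfying the properties of the universal enveloping        *)
(* algebra U(V) (Perez-Izquierdo, V a Bol algebra with zero binary         *)
(* bracket) that are recorded in the paper:                                *)
(*  - eiota(V) consists of primitive elements, and the defining identity    *)
(*    sum a_(1)(y(a_(2)z)) = sum (a_(1)(y a_(2)))z for primitive a, i.e.   *)
(*    a(yz) + y(az) = (ay)z + (ya)z;                                       *)
Record LTSEnvelope (K : fieldType) (V : lmodType K)
    (trip : V -> V -> V -> V) (A : lmodType K) := {
  emul : A -> A -> A;
  eone : A;
  eiota : V -> A;
  mul_linl : forall (c : K) (x y z : A), emul (c *: x + y) z = c *: emul x z + emul y z;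
  mul_linr : forall (c : K) (x y z : A), emul z (c *: x + y) = c *: emul z x + emul z y;
  mul1x : forall x : A, emul eone x = x;
  mulx1 : forall x : A, emul x eone = x;
  iota_lin : forall (c : K) (u v : V), eiota (c *: u + v) = c *: eiota u + eiota v;
  iota_inj : injective eiota;
  prim_id : forall (a : V) (y z : A),
    emul (eiota a) (emul y z) + emul y (emul (eiota a) z)
    = emul (emul (eiota a) y) z + emul (emul y (eiota a)) z;
  iota_comm : forall a b : V, emul (eiota a) (eiota b) = emul (eiota b) (eiota a);
  iota_trip : forall a b c : V,
    emul (eiota a) (emul (eiota b) (eiota c)) - emul (eiota b) (emul (eiota a) (eiota c))
    = eiota (trip a b c);
  deriv_ab : forall (a b : V) (x y : A),
    let D := fun w => emul (eiota a) (emul (eiota b) w) - emul (eiota b) (emul (eiota a) w) in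
    D (emul x y) = emul (D x) y + emul x (D y)
}.

Definition npow (K : fieldType) (V : lmodType K) (trip : V -> V -> V -> V)
  (A : lmodType K) (U : LTSEnvelope trip A) (x : A) (n : nat) : A :=
  iter n (fun w => emul U x w) (eone U).

(* Main.v *)
Require Import Defs.
From mathcomp Require Import all_boot all_order all_algebra.
From mathcomp Require Import zify.
Local Open Scope ring_scope.
Import GRing.Theory.

Section H.
Variables (K : fieldType) (A : lmodType K) (U : LTSEnvelope (@S2trip K) A).
Local Notation m := (emul U).

Lemma mul0l z : m 0 z = 0.
Proof.
have h := mul_linl U 1 0 0 z; rewrite !scale1r addr0 in h.
have : m 0 z + m 0 z - m 0 z = m 0 z - m 0 z by rewrite -h.
  by rewrite addrK subrr.
Qed.
Lemma mul0r z : m z 0 = 0.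
Proof.
have h := mul_linr U 1 0 0 z; rewrite !scale1r addr0 in h.
have : m z 0 + m z 0 - m z 0 = m z 0 - m z 0 by rewrite -h.
  by rewrite addrK subrr.
Qed.
Lemma mulDl x y z : m (x + y) z = m x z + m y z.
Proof. by have := mul_linl U 1 x y z; rewrite !scale1r. Qed.
Lemma mulDr x y z : m z (x + y) = m z x + m z y.
Proof. by have := mul_linr U 1 x y z; rewrite !scale1r. Qed.
Lemma mulZl c x z : m (c *: x) z = c *: m x z.
Proof. by have := mul_linl U c x 0 z; rewrite !addr0 mul0l addr0. Qed.
Lemma mulZr c x z : m z (c *: x) = c *: m z x.
Proof. by have := mul_linr U c x 0 z; rewrite !addr0 mul0r addr0. Qed.
Lemma mulNl x z : m (- x) z = - m x z.
Proof. by rewrite -scaleN1r mulZl scaleN1r. Qed.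
Lemma mulNr x z : m z (- x) = - m z x.
Proof. by rewrite -scaleN1r mulZr scaleN1r. Qed.
Lemma mulBl x y z : m (x - y) z = m x z - m y z.
Proof. by rewrite mulDl mulNl. Qed.
Lemma mulBr x y z : m z (x - y) = m z x - m z y.
Proof. by rewrite mulDr mulNr. Qed.
Lemma iotaZ c u : eiota U (c *: u) = c *: eiota U u.
Proof.
have h0 : eiota U 0 = 0.
  have h := iota_lin U 1 0 0; rewrite !scale1r addr0 in h.
  have : eiota U 0 + eiota U 0 - eiota U 0 = eiota U 0 - eiota U 0 by rewrite -h.
  by rewrite addrK subrr.
by have := iota_lin U c u 0; rewrite !addr0 h0 addr0.
Qed.
End H.

Theorem lemma3p1 (K : fieldType) (charK0 : [pchar K] =i pred0)
  (A : lmodType K) (U : LTSEnvelope (@S2trip K) A) (n : nat) (hn : (1 <= n)%N) :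
  emul U (npow U (eiota U (S2e K)) n) (eiota U (S2f K))
    - emul U (eiota U (S2f K)) (npow U (eiota U (S2e K)) n)
  = (n * (n - 1))%:R *: npow U (eiota U (S2e K)) (n - 1).
Proof.
set e := eiota U (S2e K); set f := eiota U (S2f K).
set E := npow U e.
set L := fun w => emul U e w.
have two0 : (2%:R : K) != 0 by rewrite (pcharf0P _).1.
have cancel2 : forall a b : A, a + a = b + b -> a = b.
  move=> a b h; rewrite -(scalerK two0 a) -(scalerK two0 b).
  by rewrite !scaler_nat !mulr2n h.
have ES : forall k, E k.+1 = L (E k) by [].
have Q : forall k X, emul U (E k) X = iter k L X.
  elim=> [|k IH] X; first by rewrite /E /npow /= mul1x.
  have Eke : emul U (E k) e = E k.+1.
    by rewrite IH /E /npow iterSr mulx1.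
  apply: cancel2.
  have := prim_id U (S2e K) (E k) X; rewrite -/e Eke -[emul U e (E k)]/(E k.+1) => <-.
  by rewrite !IH; congr (_ + _); rewrite iterSr.
set D := fun w => emul U e (emul U f w) - emul U f (emul U e w).
have De : D e = 2%:R *: e.
  rewrite /D /e /f (iota_trip U) -iotaZ; congr (eiota U _).
  apply/rowP => j; rewrite /S2trip !mxE !eqxx /=.
  by case: (j == 0); rewrite /= !(mul1r, mulr1, mul0r, mulr0, subr0, sub0r, eqxx).
have DE : forall k, D (E k) = (2 * k)%:R *: E k.
  elim=> [|k IH].
    by rewrite /D /E /npow /= !mulx1 iota_comm subrr scale0r.
  rewrite ES /L.
  have := deriv_ab U (S2e K) (S2f K) e (E k); rewrite -/e -/f -/D => ->.
  rewrite De IH mulZl mulZr -scalerDl; congr (_ *: _).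
  by rewrite -natrD; congr (_%:R); lia.
have G : forall k, emul U f (E k.+1) = L (emul U f (E k)) - (2 * k)%:R *: E k.
  by move=> k; rewrite -DE /D opprB addrC subrK.
have M : forall k, emul U (E k) f - emul U f (E k) = (k * (k - 1))%N%:R *: E (k - 1)%N.
  elim=> [|k IH].
    by rewrite /E /npow /= mul1x mulx1 subrr scale0r.
  rewrite Q G /= opprD opprK addrA.
  have -> : L (iter k L f) - L (emul U f (E k)) = L (emul U (E k) f - emul U f (E k)).
    by rewrite /L mulBr Q.
  rewrite IH subn1 /=.
  case: k {IH} => [|k] /=; first by rewrite /= !scale0r /L mul0r add0r.
  rewrite /L mulZr -scalerDl -natrD; congr (_ *: _); congr (_%:R).
  lia.
exact: M.
Qed.
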